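(* Let $X$ be a locally compact space, $Y$ a space, and $F\colon\mathcal{K}(X)\to\mathcal{K}(Y)$ a map satisfying: (1) if $K,L\in\mathcal{K}(X)$ and $K\subset L$, then $F(K)\subset F(L)$; $(3')$ for each open cover $\mathcal{W}$ of $X$ and each $y\in Y$ there exist a finite subfamily $\mathcal{E}\subset\mathcal{W}$ and a neighborhood $V_y$ of $y$ such that every compact $L\subset V_y$ satisfies $L\subset F(K)$ for some compact $K\subset\bigcup\mathcal{E}$. Then $Y$ is locally compact.
   Context: All spaces are completely regular. $\mathcal{K}(X)$ denotes the set of all compact subsets of $X$. *)

(* Defs.v *)
From HB Require Import structures.
From mathcomp Require Import all_boot all_order all_algebra.
From mathcomp Require Import all_classical all_reals all_analysis.
Set Implicit Arguments. Unset Strict Implicit. Unset Printing Implicit Defensive.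

(* Main.v *)
Require Import Defs.
From HB Require Import structures.
From mathcomp Require Import all_boot all_order all_algebra.
From mathcomp Require Import all_classical all_reals all_analysis.
From mathcomp Require Import Rstruct Rstruct_topology.
Local Open Scope classical_set_scope.

Theorem proposition4p2 (X Y : topologicalType) (F : set X -> set Y) :
  completely_regular_space X -> completely_regular_space Y ->
  locally_compact [set: X] ->
  (forall K : set X, compact K -> compact (F K)) ->
  (* (1) monotonicity *)
  (forall K L : set X, compact K -> compact L -> K `<=` L -> F K `<=` F L) ->
  (* (3') *)
  (forall W : set (set X), (forall U, W U -> open U) -> \bigcup_(U in W) U = setT ->
     forall y : Y, exists E : set (set X), [/\ E `<=` W, finite_set E &
       exists V : set Y, nbhs y V /\
         forall L : set Y, compact L -> L `<=` V ->
           exists K : set X, [/\ compact K, K `<=` \bigcup_(U in E) U & L `<=` F K]]) ->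
  locally_compact [set: Y].
Proof.
move=> _ crY lcX Fc Fmon H3 y _.
have regY := @completely_regular_regular Rdefinitions.R Y crY.
pose W := [set U : set X | open U /\ exists C, [/\ compact C, closed C & U `<=` C]].
have Wo : forall U, W U -> open U by move=> U [].
have Wcov : \bigcup_(U in W) U = setT.
  apply/seteqP; split => // x _.
  have [C] := lcX x I; rewrite withinET => nC [cC clC].
  exists C°; last exact: nC.
  split; first exact: open_interior.
  by exists C; split => //; exact: interior_subset.
have [E [EW finE [V [nV HV]]]] := H3 W Wo Wcov y.
pose C := \bigcup_(U in E) closure U.
have cC : compact C.
  have [B EB] := finite_fsetP.1 finE.
  rewrite /C EB bigcup_fset big_seq; apply: bigsetU_compact => U UB.
  have [_ [D [cD clD UD]]] : W U by apply: EW; rewrite EB; exact: UB.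
  apply: (subclosed_compact _ cD); first exact: closed_closure.
  by rewrite (closure_id D).1 //; exact: closureS.
have VF : V `<=` F C.
  move=> z Vz.
  have zV : [set z] `<=` V by move=> _ ->.
  have [K [cK KE zK]] := HV [set z] (@compact_set1 Y z) zV.
  apply: (Fmon K C cK cC); last by apply: zK.
  move=> x /KE [U EU Ux]; exists U => //; exact: subset_closure.
have := regY y V nV; case=> U nU clUV.
exists (closure U).
  rewrite withinET; apply: filterS nU; exact: subset_closure.
split; last exact: closed_closure.
apply: (subclosed_compact _ (Fc C cC)); first exact: closed_closure.
move=> t Ut; apply: VF; exact: clUV.
Qed.
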